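(* Let $f=f(n)\ge0$ with $f\to\infty$. There exists a constant $C>0$ such that, for all sufficiently large $n$ and every $f/n\le p\le1$, with probability at least $1-e^{-C(pn)^{1/3}}$ the number of vertices of $\mathcal G(n,p)$ whose degree lies outside $[\bar d-(pn)^{2/3},\bar d+(pn)^{2/3}]$ is at most $n/e^{Cf^{1/3}}$.
   Context: $\mathcal G(n,p)$ is the Erdős–Rényi random graph on $[n]$, each edge present independently with probability $p$. $\bar d=2m/(n-1)$, where $m$ is the number of edges of $\mathcal G(n,p)$. The constant $C$ does not depend on $p$. *)

(* Defs.v *)
From HB Require Import structures.
From mathcomp Require Import all_boot all_order all_algebra.
From mathcomp Require Import all_classical all_reals all_analysis.
Set Implicit Arguments. Unset Strict Implicit. Unset Printing Implicit Defensive.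
Import Order.TTheory GRing.Theory Num.Theory.
Local Open Scope ring_scope.

(* Potential edges of a simple graph on [n] = 'I_n : unordered pairs encoded as (i,j), i<j. *)
Definition epairs (n : nat) : {set 'I_n * 'I_n} := [set e : 'I_n * 'I_n | (val e.1 < val e.2)%N].

Definition is_graph (n : nat) (g : {set 'I_n * 'I_n}) : bool := g \subset epairs n.

Definition deg (n : nat) (g : {set 'I_n * 'I_n}) (v : 'I_n) : nat :=
  #|[set u : 'I_n | ((v, u) \in g) || ((u, v) \in g)]|.

Definition gnp_weight (R : realType) (n : nat) (p : R) (g : {set 'I_n * 'I_n}) : R :=
  p ^+ #|g| * (1 - p) ^+ (#|epairs n| - #|g|).

Definition gnp_prob (R : realType) (n : nat) (p : R) (A : {set 'I_n * 'I_n} -> bool) : R :=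
  \sum_(g : {set 'I_n * 'I_n} | is_graph g && A g) gnp_weight p g.

Definition dbar (R : realType) (n : nat) (g : {set 'I_n * 'I_n}) : R :=
  (2 * #|g|)%:R / (n.-1)%:R.

Definition n_outside (R : realType) (n : nat) (g : {set 'I_n * 'I_n}) (t : R) : nat :=
  #|[set v : 'I_n | ((deg g v)%:R < dbar R g - t) || (dbar R g + t < (deg g v)%:R)]|.

(* Main.v *)
Require Import Defs.
From HB Require Import structures.
From mathcomp Require Import all_boot all_order all_algebra.
From mathcomp Require Import all_classical all_reals all_analysis.
From mathcomp Require Import ring lra zify.
Import Order.TTheory GRing.Theory Num.Theory.
Local Open Scope ring_scope.
Lemma expm1_le (R : realType) (l : R) : 0 <= l -> l <= 1/2 -> expR l - 1 <= l + 2 * l^+2.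
Proof.
move=> l0 l1.
have h1 := expR_ge1Dx (- l).
have h2 : expR l * expR (- l) = 1 by rewrite -expRD subrr expR0.
have h3 : expR l * (1 - l) <= 1.
  rewrite -h2; apply: ler_wpM2l; [exact: expR_ge0|lra].
have h4 := expR_ge0 l.
nra.
Qed.

Lemma expNm1_le (R : realType) (l : R) : 0 <= l -> expR (- l) - 1 <= - l + l^+2.
Proof.
move=> l0.
have h1 := expR_ge1Dx l.
have h2 : expR (- l) * expR l = 1 by rewrite -expRD addNr expR0.
have h3 : expR (- l) * (1 + l) <= 1.
  rewrite -h2; apply: ler_wpM2l; [exact: expR_ge0|lra].
have h4 := expR_ge0 (- l).
nra.
Qed.

Lemma bound_U (R : realType) (k p l a : R) : 0 <= k -> 0 <= p -> 0 <= l -> l <= 1/2 ->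
  -(l * (p * k + a)) + k * (p * (expR l - 1)) <= -(l * a) + 2 * (k * p) * l^+2.
Proof.
move=> k0 p0 l0 l1.
have h := @expm1_le R l l0 l1.
have kp := mulr_ge0 k0 p0.
have : (k * p) * (expR l - 1) <= (k * p) * (l + 2 * l^+2) by apply: ler_wpM2l.
rewrite mulrA; lra.
Qed.

Lemma bound_L (R : realType) (k p l a : R) : 0 <= k -> 0 <= p -> 0 <= l ->
  -(l * (a - p * k)) + k * (p * (expR (- l) - 1)) <= -(l * a) + 2 * (k * p) * l^+2.
Proof.
move=> k0 p0 l0.
have h := @expNm1_le R l l0.
have kp := mulr_ge0 k0 p0.
have : (k * p) * (expR (- l) - 1) <= (k * p) * (- l + l^+2) by apply: ler_wpM2l.
have : 0 <= (k * p) * l^+2 by apply: mulr_ge0; rewrite ?exprn_ge0.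
rewrite mulrA; lra.
Qed.

Lemma cube_root (R : realType) (a : R) : 0 <= a -> (a ^+ 3) `^ (3%:R)^-1 = a.
Proof.
move=> a0; rewrite -powR_mulrn // -powRrM mulfV ?pnatr_eq0 // powRr1 //.
Qed.

Lemma cube_root' (R : realType) (b : R) : 0 <= b -> (b `^ (3%:R)^-1) ^+ 3 = b.
Proof.
move=> b0; rewrite -powR_mulrn ?powR_ge0 // -powRrM mulVf ?pnatr_eq0 // powRr1 //.
Qed.
Section S.
Variables (R : realType) (n : nat) (p : R).
Hypotheses (p0 : 0 <= p) (p1 : p <= 1).
Local Notation T := ('I_n * 'I_n)%type.
Local Notation E := (epairs n).
Ltac lrap := have ? := p0; have ? := p1; lra.

Definition pw (J : {set T}) : R :=
  \prod_i (if i \in J then (if i \in E then p else 0) else (if i \in E then 1 - p else 1)).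

Lemma pw_ge0 J : 0 <= pw J.
Proof.
rewrite /pw; apply: prodr_ge0 => i _.
case: (i \in J); case: (i \in E) => //=.
by rewrite subr_ge0.
Qed.

Lemma pw_graph J : is_graph J -> pw J = gnp_weight p J.
Proof.
move=> /fintype.subsetP JE; rewrite /pw /gnp_weight (bigID (mem J)) /=.
congr (_ * _).
  rewrite (eq_bigr (fun=> p)); first by rewrite prodr_const.
  by move=> i iJ; rewrite iJ (JE _ iJ).
rewrite (bigID (mem E)) /= [X in _ * X]big1 ?mulr1; last first.
  by move=> i /andP[/negbTE -> /negbTE ->].
rewrite (eq_bigr (fun=> 1 - p)); last by move=> i /andP[/negbTE -> ->].
rewrite prodr_const; congr (_ ^+ _).
rewrite -(cardsID J E) (finset.setIidPr _) ?addKn; last by apply/fintype.subsetP.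
by apply: eq_card => i; rewrite [RHS]inE.
Qed.

Lemma pw_nongraph J : ~~ is_graph J -> pw J = 0.
Proof.
move=> /fintype.subsetPn[i iJ iE]; rewrite /pw (bigD1 i) //= iJ (negbTE iE).
by rewrite mul0r.
Qed.

Lemma prob_pw (A : {set T} -> bool) :
  gnp_prob p A = \sum_J pw J * (A J)%:R.
Proof.
rewrite /gnp_prob [RHS](bigID (fun J => is_graph J)) /=.
rewrite [X in _ = _ + X]big1 ?addr0; last by move=> J /pw_nongraph ->; rewrite mul0r.
rewrite [RHS](bigID (fun J => A J)) /= [X in _ = _ + X]big1 ?addr0; last first.
  by move=> J /andP[_ /negbTE ->]; rewrite mulr0.
apply: eq_big => [J|J /andP[gJ ->]]; first by rewrite andbC.
by rewrite mulr1 pw_graph.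
Qed.

Lemma genfun (h : T -> R) :
  \sum_J pw J * \prod_(i in J) h i =
  \prod_i (if i \in E then 1 - p + p * h i else 1).
Proof.
rewrite [RHS](eq_bigr (fun i => (if i \in E then p else 0) * h i
                    + (if i \in E then 1 - p else 1))); last first.
  by move=> i _; case: (i \in E); rewrite ?mul0r; lra.
rewrite (@bigA_distr R 0 1 *%R +%R).
apply: eq_bigr => J _; rewrite /pw (big_mkcond (mem J)) -big_split /=.
by apply: eq_bigr => i _; case: (i \in J); rewrite ?mulr1.
Qed.

Lemma pw_sum1 : \sum_J pw J = 1.
Proof.
have := genfun (fun=> 1).
rewrite (eq_bigr (fun J => pw J)); last by move=> J _; rewrite big1 ?mulr1.
move=> ->; rewrite big1 // => i _; case: (i \in E) => //; lra.
Qed.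

Lemma le_expect (G1 G2 : {set T} -> R) :
  (forall J, is_graph J -> G1 J <= G2 J) ->
  \sum_J pw J * G1 J <= \sum_J pw J * G2 J.
Proof.
move=> H; apply: ler_sum => J _.
case: (boolP (is_graph J)) => gJ; last by rewrite pw_nongraph // !mul0r.
by apply: ler_wpM2l; [exact: pw_ge0 | exact: H].
Qed.

Lemma prod_exp (K J : {set T}) (e : R) :
  \prod_(i in J) (if i \in K then e else 1) = e ^+ #|J :&: K|.
Proof.
rewrite -big_mkcondr /= -prodr_const.
by apply: eq_bigl => i; rewrite inE.
Qed.

Lemma chernoff (K : {set T}) (s b : R) :
  \sum_J pw J * (b <= s * #|J :&: K|%:R)%R%:R
  <= expR (- b + #|E :&: K|%:R * (p * (expR s - 1))).
Proof.
apply: (@le_trans _ _ (\sum_J pw J *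
   (expR (- b) * \prod_(i in J) (if i \in K then expR s else 1)))).
  apply: le_expect => J _; rewrite prod_exp -expRM_natl -expRD.
  case H: (b <= _) => /=; last exact: expR_ge0.
  move: H => /= H.
  apply: le_trans (expR_ge1Dx _); rewrite lerDl; lra.
under eq_bigr do rewrite mulrCA.
rewrite -mulr_sumr genfun.
rewrite (eq_bigr (fun i => if i \in E :&: K then 1 - p + p * expR s else 1)); last first.
  by move=> i _; rewrite finset.in_setI; case: (i \in E); case: (i \in K) => //=; lrap.
rewrite -big_mkcond /= prodr_const expRD ler_wpM2l ?expR_ge0 //.
rewrite expRM_natl; apply: lerXn2r; rewrite ?nnegrE ?expR_ge0 //.
  have := mulr_ge0 p0 (expR_ge0 s); lrap.
have := expR_ge1Dx (p * (expR s - 1)); rewrite mulrBr mulr1; lrap.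
Qed.

Lemma cardE2 : (2 * #|E|)%N = (n * n.-1)%N.
Proof.
pose sw := fun e : T => (e.2, e.1).
have swK : cancel sw sw by case.
pose D := [set e : T | e.1 == e.2].
have cD : #|D| = n.
  have -> : D = [set (i, i) | i in [set: 'I_n]].
    apply/setP => -[a b]; rewrite inE /=; apply/eqP/imsetP => [->|[i _ [-> ->]]//].
    by exists b; rewrite ?finset.in_setT.
  by rewrite card_imset ?cardsT ?card_ord // => i j [].
have c1 : (~: E) :&: D = D.
  apply/setP => -[a b]; rewrite !inE /=; apply/andP/eqP => [[_ /eqP //]|->].
  by rewrite ltnn.
have c2 : (~: E) :\: D = sw @: E.
  rewrite (can2_imset_pre _ swK swK); apply/setP => -[a b]; rewrite !inE /=.
  by rewrite -val_eqE; case: ltngtP.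
have := cardsC E; rewrite card_prod card_ord -(cardsID D (~: E)) c1 c2.
rewrite card_imset; last exact: can_inj swK.
rewrite cD -subn1 mulnBr muln1; move: #|E| => e; lia.
Qed.

Definition phi (v u : 'I_n) : T := if (val v < val u)%N then (v, u) else (u, v).

Lemma phi_inj v : injective (phi v).
Proof.
move=> a b; rewrite /phi.
by case: ltnP => h1; case: ltnP => h2 [] => *; congruence.
Qed.

Definition Kv (v : 'I_n) : {set T} := phi v @: [set: 'I_n].

Lemma phiE v u : (phi v u \in E) = (u != v).
Proof.
rewrite /phi; case: (ltngtP (val v) (val u)) => h; rewrite inE /=.
- by rewrite h; apply/esym/negP => /eqP e; move: h; rewrite e ltnn.
- by rewrite h; apply/esym/negP => /eqP e; move: h; rewrite e ltnn.
- by rewrite h ltnn (val_inj h) eqxx.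
Qed.

Lemma card_EK v : #|E :&: Kv v| = n.-1.
Proof.
have -> : E :&: Kv v = phi v @: [set~ v].
  apply/setP => x; rewrite finset.in_setI; apply/andP/imsetP.
    by move=> [xE /imsetP[u _ xu]]; exists u; rewrite // in_setC1 -phiE -xu.
  move=> [u]; rewrite in_setC1 => uv ->; rewrite phiE uv; split=> //.
  by apply/imsetP; exists u; rewrite ?finset.in_setT.
by rewrite card_imset ?cardsC1 ?card_ord //; exact: phi_inj.
Qed.

Lemma deg_K (J : {set T}) v : is_graph J -> deg J v = #|J :&: Kv v|.
Proof.
move=> /fintype.subsetP JE.
have -> : J :&: Kv v = phi v @: [set u | phi v u \in J].
  apply/setP => x; rewrite !inE; apply/andP/imsetP.
    by move=> [xJ /imsetP[u _ xu]]; exists u; rewrite // inE -xu.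
  move=> [u]; rewrite inE => uJ ->; split=> //.
  by apply/imsetP; exists u; rewrite ?finset.in_setT.
rewrite card_imset; last exact: phi_inj.
rewrite /deg; apply: eq_card => u; rewrite !inE /phi.
case: ltnP => h; apply/orP/idP => [[] // H|]; try by [left|right].
- by have := JE _ H; rewrite inE /= ltnNge ltnW.
- by have := JE _ H; rewrite inE /= ltnNge h.
Qed.

Definition ev (s b : R) (K g : {set T}) : bool := (b <= s * #|g :&: K|%:R).

Lemma pointwise (g : {set T}) (x3 l a t c : R) : is_graph g ->
  0 < l -> 0 < c -> 4 <= t -> 0 < (n.-1)%:R :> R ->
  2 * (p * #|E|%:R) + 2 * a = (x3 + t / 4) * (n.-1)%:R ->
  2 * (p * #|E|%:R) - 2 * a = (x3 - t / 4) * (n.-1)%:R ->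
  p * (n.-1)%:R = x3 - p ->
  1 - (ev l (l * (p * #|E|%:R + a)) E g)%:R
    - (ev (- l) (l * (a - p * #|E|%:R)) E g)%:R
    - c^-1 * \sum_v ((ev l (l * (p * (n.-1)%:R + t / 2)) (Kv v) g)%:R
                     + (ev (- l) (l * (t / 2 - p * (n.-1)%:R)) (Kv v) g)%:R)
  <= ((n_outside g t)%:R <= c)%R%:R.
Proof.
move=> gg l0 c0 t4 n10 hA hB hp.
have S0 : 0 <= \sum_v ((ev l (l * (p * (n.-1)%:R + t / 2)) (Kv v) g)%:R
                     + (ev (- l) (l * (t / 2 - p * (n.-1)%:R)) (Kv v) g)%:R) :> R.
  by apply: sumr_ge0 => v _; apply: addr_ge0; apply: ler0n.
have ci0 : 0 < c^-1 by rewrite invr_gt0.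
have CS := mulr_ge0 (ltW ci0) S0.
have e1 := ler0n R (ev l (l * (p * #|E|%:R + a)) E g).
have e2 := ler0n R (ev (- l) (l * (a - p * #|E|%:R)) E g).
case G: ((n_outside g t)%:R <= c); first by rewrite /=; lra.
rewrite /=.
case U1: (ev l (l * (p * #|E|%:R + a)) E g); first by rewrite /=; lra.
case L1: (ev (- l) (l * (a - p * #|E|%:R)) E g); first by rewrite /=; lra.
rewrite /= !mulr0n.
move/negbT: U1; move/negbT: L1; rewrite /ev (finset.setIidPl gg) => L1 U1.
rewrite -ltNge ltr_pM2l // in U1.
rewrite -ltNge mulNr -mulrN ltr_pM2l // in L1.
have db1 : dbar R g < x3 + t / 4.
  by rewrite /dbar natrM ltr_pdivrMr //; lra.
have db2 : x3 - t / 4 < dbar R g.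
  by rewrite /dbar natrM ltr_pdivlMr //; lra.
have key : (n_outside g t)%:R <= \sum_v ((ev l (l * (p * (n.-1)%:R + t / 2)) (Kv v) g)%:R
                     + (ev (- l) (l * (t / 2 - p * (n.-1)%:R)) (Kv v) g)%:R) :> R.
  rewrite /n_outside -sum1_card natr_sum big_mkcond /=.
  apply: ler_sum => v _; rewrite inE.
  case: ifP => O; last by apply: addr_ge0; apply: ler0n.
  rewrite /ev -deg_K // mulNr -mulrN !ler_pM2l //.
  have [d1|d1] := boolP (p * (n.-1)%:R + t / 2 <= (deg g v)%:R).
    by have := ler0n R (t / 2 - p * (n.-1)%:R <= - (deg g v)%:R)%R; rewrite /= mulr1n; lra.
  rewrite -ltNge in d1.
  have d2 : t / 2 - p * (n.-1)%:R <= - (deg g v)%:R.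
    have := p0; have := p1; set d := (deg g v)%:R in O d1 *; set D := dbar R g in O db1 db2 *.
    by move: O => /orP[] O pp pp0; lra.
  by rewrite d2 /= mulr0n mulr1n add0r.
have : c < (n_outside g t)%:R by rewrite ltNge G.
move=> cn.
have : 1 < c^-1 * (n_outside g t)%:R.
  have h1 : c^-1 * c = 1 by rewrite mulVf // lt0r_neq0.
  by rewrite -[X in X < _]h1 ltr_pM2l.
have : c^-1 * (n_outside g t)%:R <= c^-1 * \sum_v ((ev l (l * (p * (n.-1)%:R + t / 2)) (Kv v) g)%:R
                     + (ev (- l) (l * (t / 2 - p * (n.-1)%:R)) (Kv v) g)%:R).
  by apply: ler_wpM2l => //; exact: ltW.
lra.
Qed.

Lemma lin_exp (A B : {set T} -> R) (D F : 'I_n -> {set T} -> R) (ci : R) :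
 \sum_g pw g * (1 - A g - B g - ci * \sum_v (D v g + F v g)) =
 \sum_g pw g - \sum_g pw g * A g - \sum_g pw g * B g
   - ci * \sum_v (\sum_g pw g * D v g + \sum_g pw g * F v g).
Proof.
have e : \sum_v (\sum_g pw g * D v g + \sum_g pw g * F v g)
         = \sum_g pw g * \sum_v (D v g + F v g).
  under eq_bigr do rewrite -big_split /=.
  rewrite exchange_big /=; apply: eq_bigr => g _; rewrite mulr_sumr.
  by apply: eq_bigr => v _; rewrite mulrDr.
rewrite e mulr_sumr -!sumrB; apply: eq_bigr => g _; ring.
Qed.

Lemma core (x c : R) : (2 <= n)%N -> 1024 <= x -> p * n%:R = x ^+ 3 -> 0 < c ->
  1 - 2 * expR (- (x / 256)) - n%:R / c * (2 * expR (- (x / 256)))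
  <= gnp_prob p (fun g : {set T} => (n_outside g (x ^+ 2))%:R <= c).
Proof.
move=> n2 x1 hpn c0.
set t := x ^+ 2. set l := (16 * x)^-1. set n1 : R := (n.-1)%:R.
set N : R := #|E|%:R. set a := t * n1 / 8. set eps := expR (- (x / 256)).
have x0 : 0 < x by lra.
have l16 : l * (16 * x) = 1 by rewrite /l mulVf // mulf_neq0 // lt0r_neq0.
have l0 : 0 < l by rewrite /l invr_gt0 mulr_gt0.
have l12 : l <= 1 / 2 by nra.
have lx : l * x = 1 / 16 by lra.
have n1p : 1 <= n1 by rewrite /n1 ler1n; lia.
have hnn1 : n%:R = n1 + 1 by rewrite /n1 natr1 prednK // ltnW.
have hN : 2 * N = n%:R * n1 by rewrite /N /n1 -!natrM cardE2.
have hpn1 : p * n1 = x ^+ 3 - p by rewrite -hpn hnn1; ring.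
have hpN : p * N = x ^+ 3 * n1 / 2.
  have : 2 * (p * N) = x ^+ 3 * n1 by rewrite mulrCA hN mulrA hpn.
  lra.
have t4 : 4 <= t by rewrite /t; nra.
have hA : 2 * (p * N) + 2 * a = (x ^+ 3 + t / 4) * n1 by rewrite /a hpN; field.
have hB : 2 * (p * N) - 2 * a = (x ^+ 3 - t / 4) * n1 by rewrite /a hpN; field.
have n10 : 0 < n1 by lra.
have P := fun g gg => @pointwise g (x ^+ 3) l a t c gg l0 c0 t4 n10 hA hB hpn1.
have := le_expect _ _ P; rewrite lin_exp pw_sum1 => H.
rewrite prob_pw; apply: (le_trans _ H).
have E1 : l * a = x * n1 / 128.
  transitivity ((l * x) * x * n1 / 8); first by rewrite /a /t; field.
  by rewrite lx; field.
have E2 : 2 * (N * p) * l ^+ 2 = x * n1 / 256.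
  transitivity (2 * (p * N) * l ^+ 2); first by ring.
  rewrite hpN; transitivity ((l * x) ^+ 2 * x * n1); first by field.
  by rewrite lx; field.
have xn1 : x <= x * n1 by rewrite ler_peMr // ltW.
have E3 : l * (t / 2) = x / 32.
  transitivity ((l * x) * x / 2); first by rewrite /t; field.
  by rewrite lx; field.
have E4 : 2 * (n1 * p) * l ^+ 2 <= x / 128.
  have : n1 * p <= x ^+ 3 by rewrite mulrC hpn1; have := p0; lra.
  move=> h; apply: (@le_trans _ _ (2 * x ^+ 3 * l ^+ 2)).
    rewrite -mulrA -[X in _ <= X]mulrA ler_pM2l //.
    by apply: ler_wpM2r => //; rewrite exprn_ge0 // ltW.
  have -> : 2 * x ^+ 3 * l ^+ 2 = 2 * (l * x) ^+ 2 * x by ring.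
  by rewrite lx expr2; lra.
have bU1 : \sum_g pw g * (ev l (l * (p * #|E|%:R + a)) E g)%:R <= eps.
  apply: le_trans (chernoff E l (l * (p * #|E|%:R + a))) _.
  rewrite finset.setIid /eps ler_expR.
  apply: le_trans (@bound_U R N p l a (ler0n _ _) p0 (ltW l0) l12) _.
  rewrite E1 E2; lra.
have bL1 : \sum_g pw g * (ev (- l) (l * (a - p * #|E|%:R)) E g)%:R <= eps.
  apply: le_trans (chernoff E (- l) (l * (a - p * #|E|%:R))) _.
  rewrite finset.setIid /eps ler_expR.
  apply: le_trans (@bound_L R N p l a (ler0n _ _) p0 (ltW l0)) _.
  rewrite E1 E2; lra.
have bUv : forall v, \sum_g pw g * (ev l (l * (p * n.-1%:R + t / 2)) (Kv v) g)%:R <= eps.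
  move=> v; apply: le_trans (chernoff (Kv v) l (l * (p * n.-1%:R + t / 2))) _.
  rewrite card_EK /eps ler_expR.
  apply: le_trans (@bound_U R n1 p l (t / 2) (ler0n _ _) p0 (ltW l0) l12) _.
  rewrite E3; lra.
have bLv : forall v, \sum_g pw g * (ev (- l) (l * (t / 2 - p * n.-1%:R)) (Kv v) g)%:R <= eps.
  move=> v; apply: le_trans (chernoff (Kv v) (- l) (l * (t / 2 - p * n.-1%:R))) _.
  rewrite card_EK /eps ler_expR.
  apply: le_trans (@bound_L R n1 p l (t / 2) (ler0n _ _) p0 (ltW l0)) _.
  rewrite E3; lra.
have S : \sum_v (\sum_g pw g * (ev l (l * (p * n.-1%:R + t / 2)) (Kv v) g)%:R +
        \sum_g pw g * (ev (- l) (l * (t / 2 - p * n.-1%:R)) (Kv v) g)%:R)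
   <= n%:R * (2 * eps).
  apply: le_trans (ler_sum _ (fun v _ => lerD (bUv v) (bLv v))) _.
  rewrite sumr_const card_ord -mulr_natl; lra.
have ci0 : 0 < c^-1 by rewrite invr_gt0.
have S' := ler_wpM2l (ltW ci0) S.
have -> : n%:R / c * (2 * eps) = c^-1 * (n%:R * (2 * eps)).
  by rewrite [_ / c]mulrC -mulrA.
lra.
Qed.
End S.

Theorem lemma4p3 (R : realType) (f : nat -> R) :
  (forall n, 0 <= f n) ->
  (forall M : R, exists N0 : nat, forall n : nat, (N0 <= n)%N -> M <= f n) ->
  exists C : R, 0 < C /\
    exists N : nat, forall n : nat, (N <= n)%N ->
      forall p : R, f n / n%:R <= p -> p <= 1 ->
        1 - expR (- (C * ((p * n%:R) `^ (3%:R)^-1)))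
        <= gnp_prob p (fun g : {set 'I_n * 'I_n} =>
             (n_outside g ((p * n%:R) `^ (2%:R / 3%:R)))%:R
               <= n%:R / expR (C * (f n `^ (3%:R)^-1))).
Proof.
move=> f0 finf.
exists (1 / 1024); split; first lra.
have [N0 HN0] := finf (1024 ^+ 3).
exists (maxn N0 2) => n Hn p hp hp1.
have n2 : (1 < n)%N by move: Hn; rewrite geq_max => /andP[].
have hf : 1024 ^+ 3 <= f n by apply: HN0; move: Hn; rewrite geq_max => /andP[].
have n0 : 0 < n%:R :> R by rewrite ltr0n; lia.
have hpn : f n <= p * n%:R by rewrite -ler_pdivrMr.
have p0 : 0 <= p by apply: le_trans hp; apply: divr_ge0 => //; exact: ltW.
set b := p * n%:R in hpn *.
have b0 : 0 <= b by apply: le_trans hpn.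
have r0 : 0 <= (3%:R : R)^-1 by rewrite invr_ge0.
set x := b `^ (3%:R)^-1.
have hx3 : p * n%:R = x ^+ 3 by rewrite /x cube_root'.
have x1 : 1024 <= x.
  have k0 : (0 : R) <= 1024 by apply: ler0n.
  have k1 : (1024 : R) ^+ 3 \in Num.nneg by rewrite nnegrE; apply: exprn_ge0.
  have k2 : b \in Num.nneg by rewrite nnegrE.
  have := ge0_ler_powR r0 k1 k2 (le_trans hf hpn).
  by rewrite (@cube_root R 1024 k0).
have ht : b `^ (2%:R / 3%:R) = x ^+ 2.
  by rewrite mulrC powRrM powR_mulrn // powR_ge0.
have f3 : f n `^ (3%:R)^-1 <= x.
  by apply: (ge0_ler_powR r0); rewrite ?nnegrE.
rewrite ht.
set c := n%:R / expR (1 / 1024 * f n `^ (3%:R)^-1).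
have c0 : 0 < c by apply: divr_gt0 n0 (expR_gt0 _).
apply: (le_trans _ (@core R n p p0 hp1 x c n2 x1 hx3 c0)).
have nc : n%:R / c = expR (1 / 1024 * f n `^ (3%:R)^-1).
  by rewrite /c invf_div mulrCA mulfV ?mulr1 // lt0r_neq0.
rewrite nc.
set eps := expR (- (x / 256)).
have eps0 : 0 <= eps by apply: expR_ge0.
have e0 : expR (1 / 1024 * f n `^ (3%:R)^-1) * (2 * eps)
          <= expR (1 / 1024 * x) * (2 * eps).
  by apply: ler_wpM2r; [lra | rewrite ler_expR; lra].
have e1 : expR (1 / 1024 * x) * eps = expR (- (3 * x / 1024)).
  by rewrite /eps -expRD; congr expR; field.
have e2 : eps <= expR (- (3 * x / 1024)) by rewrite /eps ler_expR; lra.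
have e4 : 4 <= expR (2 * x / 1024).
  have h1 := expR_ge1Dx (1 : R).
  have h2 : expR (2 : R) = expR 1 * expR 1 by rewrite -expRD.
  have h3 : expR (2 : R) <= expR (2 * x / 1024) by rewrite ler_expR; lra.
  have h4 : 0 <= expR (1 : R) by apply: expR_ge0.
  nra.
have e5 : expR (- (1 / 1024 * x)) = expR (2 * x / 1024) * expR (- (3 * x / 1024)).
  by rewrite -expRD; congr expR; field.
have e6 := expR_ge0 (- (3 * x / 1024)).
have e7 : 4 * expR (- (3 * x / 1024)) <= expR (2 * x / 1024) * expR (- (3 * x / 1024)).
  by apply: ler_wpM2r.
have e8 : expR (1 / 1024 * x) * (2 * eps) = 2 * expR (- (3 * x / 1024)).
  by rewrite mulrCA e1.
lra.
Qed.
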